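(* Let $\alpha,\beta\in[0,1)$ and $\mathcal E(\alpha,\beta)=\{x\in\mathbb R:\mathcal D(\beta,x)=0\text{ or }\Psi(\alpha,\beta,x)=0\}$. Then $\mathcal E(\alpha,\beta)$ consists exactly of the three zeros of $\mathcal D(\beta,\cdot)$ together with: the value $\frac32$ if $\alpha=0$; the value $\frac12$ if $\alpha=\frac12$; and the value $1+\frac12\cos(2\pi\alpha)$ if $3\alpha+\beta\equiv\frac12\pmod 1$.
   Context: $\mathcal D(\beta,\lambda)=-\lambda^3+3\lambda^2-\frac{45}{16}\lambda+\frac{13}{16}-\frac1{32}\cos2\pi\beta$; $\Psi(\alpha,\beta,\lambda)=(1-\lambda)^2-\frac1{16}+\frac{1-\lambda}{4}(2e^{-2\pi i\alpha}+e^{-2\pi i(2\alpha+\beta)})+\frac1{16}(e^{-4\pi i\alpha}+2e^{-2\pi i(\alpha+\beta)})$. *)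

(* Defs.v *)
From Stdlib Require Import Reals Lra.
From Coquelicot Require Import Coquelicot.
Open Scope R_scope.

Definition Dfun (beta lam : R) : R :=
  - lam ^ 3 + 3 * lam ^ 2 - 45 / 16 * lam + 13 / 16 - 1 / 32 * cos (2 * PI * beta).

Definition cexpi (theta : R) : C := (cos theta, sin theta).

Definition Psi (alpha beta lam : R) : C :=
  (RtoC ((1 - lam) ^ 2 - 1 / 16)
   + RtoC ((1 - lam) / 4)
       * (RtoC 2 * cexpi (- 2 * PI * alpha)
          + cexpi (- 2 * PI * (2 * alpha + beta)))
   + RtoC (1 / 16)
       * (cexpi (- 4 * PI * alpha)
          + RtoC 2 * cexpi (- 2 * PI * (alpha + beta))))%C.

Definition Eset (alpha beta : R) (x : R) : Prop :=
  Dfun beta x = 0 \/ Psi alpha beta x = RtoC 0.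

(* Main.v *)
Require Import Defs.
From Stdlib Require Import Reals ZArith Lra Lia.
From Coquelicot Require Import Coquelicot.
Open Scope R_scope.

Lemma cexpi_add a b : cexpi (a + b) = Cmult (cexpi a) (cexpi b).
Proof. unfold cexpi, Cmult; simpl. rewrite cos_plus, sin_plus. f_equal; ring. Qed.

Definition Kr v zr zi := v*(zr^2 - zi^2) + 2*zr.
Definition Ki v zr zi := v*(2*zr*zi) + 2*zi.
Definition Er v zr zi wr wi :=
  v^2 + 2*v*zr + zr^2 - zi^2 - 1 + (wr*Kr v zr zi - wi*Ki v zr zi).
Definition Ei v zr zi wr wi :=
  2*v*zi + 2*zr*zi + (wr*Ki v zr zi + wi*Kr v zr zi).
Definition C3r zr zi := (zr*zr - zi*zi)*zr - (zr*zi + zi*zr)*zi.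
Definition C3i zr zi := (zr*zr - zi*zi)*zi + (zr*zi + zi*zr)*zr.
Definition Yr zr zi wr wi := C3r zr zi * wr - C3i zr zi * wi.
Definition Yi zr zi wr wi := C3r zr zi * wi + C3i zr zi * wr.

Lemma Psi_eq alpha beta x :
  Psi alpha beta x =
  (Er (4*(1-x)) (cos (-2*PI*alpha)) (sin (-2*PI*alpha)) (cos (-2*PI*beta)) (sin (-2*PI*beta)) / 16,
   Ei (4*(1-x)) (cos (-2*PI*alpha)) (sin (-2*PI*alpha)) (cos (-2*PI*beta)) (sin (-2*PI*beta)) / 16).
Proof.
  unfold Psi.
  set (a := -2*PI*alpha). set (b := -2*PI*beta).
  replace (- 2 * PI * (2 * alpha + beta)) with (a + a + b) by (unfold a, b; ring).
  replace (- 4 * PI * alpha) with (a + a) by (unfold a; ring).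
  replace (- 2 * PI * (alpha + beta)) with (a + b) by (unfold a, b; ring).
  rewrite !cexpi_add. unfold cexpi, Cmult, Cplus, RtoC, Er, Ei, Kr, Ki; simpl.
  f_equal; field.
Qed.

Lemma Psi_zero alpha beta x :
  Psi alpha beta x = RtoC 0 <->
  Er (4*(1-x)) (cos (-2*PI*alpha)) (sin (-2*PI*alpha)) (cos (-2*PI*beta)) (sin (-2*PI*beta)) = 0 /\
  Ei (4*(1-x)) (cos (-2*PI*alpha)) (sin (-2*PI*alpha)) (cos (-2*PI*beta)) (sin (-2*PI*beta)) = 0.
Proof.
  rewrite Psi_eq. unfold RtoC. split.
  - intro H. injection H. intros. split; lra.
  - intros [H1 H2]. rewrite H1, H2. f_equal; field.
Qed.

Lemma cmul0 a b kr ki : a*kr - b*ki = 0 -> b*kr + a*ki = 0 -> kr^2+ki^2 <> 0 ->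
  a = 0 /\ b = 0.
Proof.
  intros H1 H2 H3.
  assert (E : (a^2+b^2)*(kr^2+ki^2) = (a*kr - b*ki)^2 + (b*kr + a*ki)^2) by ring.
  rewrite H1, H2 in E. replace (0^2+0^2) with 0 in E by ring.
  assert (a^2+b^2 = 0).
  { apply Rmult_integral in E as [E|E]; [exact E| exfalso; apply H3; lra]. }
  split; nra.
Qed.

Lemma key v zr zi wr wi : zi^2 = 1 - zr^2 -> wi^2 = 1 - wr^2 ->
  (v-1)*(v+1)*(v+2*zr)^2 =
  Er v zr zi wr wi * (Er v zr zi wr wi - 2*(wr*Kr v zr zi - wi*Ki v zr zi))
  + Ei v zr zi wr wi * (Ei v zr zi wr wi - 2*(wr*Ki v zr zi + wi*Kr v zr zi)).
Proof. intros Hz Hw. unfold Er, Ei, Kr, Ki. ring [Hz Hw]. Qed.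

Lemma third_r zr zi wr wi : zi^2 = 1 - zr^2 ->
  (Yr zr zi wr wi + 1) * Kr (-2*zr) zr zi - Yi zr zi wr wi * Ki (-2*zr) zr zi =
  C3r zr zi * Er (-2*zr) zr zi wr wi - C3i zr zi * Ei (-2*zr) zr zi wr wi.
Proof. intros Hz. unfold Yr, Yi, C3r, C3i, Er, Ei, Kr, Ki. ring [Hz]. Qed.

Lemma third_i zr zi wr wi : zi^2 = 1 - zr^2 ->
  Yi zr zi wr wi * Kr (-2*zr) zr zi + (Yr zr zi wr wi + 1) * Ki (-2*zr) zr zi =
  C3r zr zi * Ei (-2*zr) zr zi wr wi + C3i zr zi * Er (-2*zr) zr zi wr wi.
Proof. intros Hz. unfold Yr, Yi, C3r, C3i, Er, Ei, Kr, Ki. ring [Hz]. Qed.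

Lemma conv_r zr zi wr wi : zi^2 = 1 - zr^2 -> wi^2 = 1 - wr^2 ->
  Er (-2*zr) zr zi wr wi =
  (Yr zr zi wr wi + 1) * (C3r zr (-zi) * Kr (-2*zr) zr zi - C3i zr (-zi) * Ki (-2*zr) zr zi)
  - Yi zr zi wr wi * (C3r zr (-zi) * Ki (-2*zr) zr zi + C3i zr (-zi) * Kr (-2*zr) zr zi).
Proof. intros Hz Hw. unfold Yr, Yi, C3r, C3i, Er, Ei, Kr, Ki. ring [Hz Hw]. Qed.

Lemma conv_i zr zi wr wi : zi^2 = 1 - zr^2 -> wi^2 = 1 - wr^2 ->
  Ei (-2*zr) zr zi wr wi =
  (Yr zr zi wr wi + 1) * (C3r zr (-zi) * Ki (-2*zr) zr zi + C3i zr (-zi) * Kr (-2*zr) zr zi)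
  + Yi zr zi wr wi * (C3r zr (-zi) * Kr (-2*zr) zr zi - C3i zr (-zi) * Ki (-2*zr) zr zi).
Proof. intros Hz Hw. unfold Yr, Yi, C3r, C3i, Er, Ei, Kr, Ki. ring [Hz Hw]. Qed.

Lemma y_eq a b :
  cos (a+a+a+b) = Yr (cos a) (sin a) (cos b) (sin b) /\
  sin (a+a+a+b) = Yi (cos a) (sin a) (cos b) (sin b).
Proof.
  unfold Yr, Yi, C3r, C3i. split; repeat rewrite ?cos_plus, ?sin_plus; ring.
Qed.

Lemma cos_m1 t : cos t = -1 -> exists k : Z, t = 2 * IZR k * PI + PI.
Proof.
  intro H. assert (H0 : cos (t/2) = 0).
  { replace t with (2*(t/2)) in H by field. rewrite cos_2a_cos in H. nra. }
  apply cos_eq_0_0 in H0 as [k Hk]. exists k. lra.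
Qed.

Lemma cos_1 t : cos t = 1 -> exists k : Z, t = 2 * IZR k * PI.
Proof.
  intro H. assert (H0 : sin (t/2) = 0).
  { replace t with (2*(t/2)) in H by field. rewrite cos_2a_sin in H. nra. }
  apply sin_eq_0_0 in H0 as [k Hk]. exists k. lra.
Qed.

Lemma m1_cos (k : Z) t : t = 2 * IZR k * PI + PI -> cos t = -1 /\ sin t = 0.
Proof.
  intro H. assert (H0 : cos (t/2) = 0) by (apply cos_eq_0_1; exists k; lra).
  replace t with (2*(t/2)) by field. rewrite cos_2a_cos, sin_2a, H0. split; ring.
Qed.

Lemma div2PI a b : 2 * PI * a = 2 * PI * b -> a = b.
Proof.
  intro H. pose proof PI_RGT_0.
  assert (E : (a - b) * (2*PI) = 0) by lra.
  apply Rmult_integral in E as [E|E]; lra.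
Qed.

Lemma sin2 t : sin t ^ 2 = 1 - cos t ^ 2.
Proof. pose proof (sin2_cos2 t). unfold Rsqr in H. lra. Qed.

Theorem proposition4p4 (alpha beta : R)
  (Ha : 0 <= alpha < 1) (Hb : 0 <= beta < 1) :
  (* D(beta, .) has three real zeros (counted with multiplicity) *)
  (exists r1 r2 r3 : R, forall x : R,
      Dfun beta x = - ((x - r1) * (x - r2) * (x - r3))) /\
  (* and E(alpha, beta) consists exactly of those zeros plus the listed values *)
  (forall x : R,
      Eset alpha beta x <->
      (Dfun beta x = 0
       \/ (alpha = 0 /\ x = 3 / 2)
       \/ (alpha = 1 / 2 /\ x = 1 / 2)
       \/ ((exists k : Z, 3 * alpha + beta = 1 / 2 + IZR k)
           /\ x = 1 + 1 / 2 * cos (2 * PI * alpha)))).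
Proof.
  split.
  - set (th := (PI + 2*PI*beta)/3).
    set (ca := cos th). set (sb := sin th).
    exists (1 + ca/2), (1 + (-ca/2 - sqrt 3/2*sb)/2), (1 + (-ca/2 + sqrt 3/2*sb)/2).
    intro x.
    assert (Hsb : sb^2 = 1 - ca^2) by apply sin2.
    assert (Hs3 : sqrt 3 ^ 2 = 3).
    { simpl. rewrite Rmult_1_r. apply sqrt_sqrt. lra. }
    assert (Hc : cos (2*PI*beta) = -(4*ca^3 - 3*ca)).
    { assert (E : cos (th+th+th) = 4*ca^3 - 3*ca).
      { repeat rewrite ?cos_plus, ?sin_plus. fold ca sb. ring [Hsb]. }
      replace (th+th+th) with (2*PI*beta + PI) in E by (unfold th; field).
      rewrite neg_cos in E. lra. }
    unfold Dfun. rewrite Hc. set (s := sqrt 3) in *. clearbody s ca sb.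
    assert (E: (x - (1 + (-ca/2 - s/2*sb)/2)) * (x - (1 + (-ca/2 + s/2*sb)/2))
               = (x-1+ca/4)^2 - (s^2)*(sb^2)/16) by field.
    rewrite Rmult_assoc, E, Hsb, Hs3. field.
  - intro x. unfold Eset. rewrite Psi_zero.
    assert (Hca : cos (2*PI*alpha) = cos (-2*PI*alpha))
      by (rewrite <- cos_neg; f_equal; ring).
    assert (Hcb : cos (2*PI*beta) = cos (-2*PI*beta))
      by (rewrite <- cos_neg; f_equal; ring).
    assert (Hz : sin (-2*PI*alpha) ^ 2 = 1 - cos (-2*PI*alpha) ^2) by apply sin2.
    assert (Hw : sin (-2*PI*beta) ^ 2 = 1 - cos (-2*PI*beta) ^2) by apply sin2.
    destruct (y_eq (-2*PI*alpha) (-2*PI*beta)) as [Hyr Hyi].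
    assert (Ht : -2*PI*alpha + -2*PI*alpha + -2*PI*alpha + -2*PI*beta
                 = -2*PI*(3*alpha+beta)) by ring.
    rewrite Ht in Hyr, Hyi.
    unfold Dfun. rewrite Hca, Hcb.
    set (zr := cos (-2*PI*alpha)) in *.
    set (zi := sin (-2*PI*alpha)) in *.
    set (wr := cos (-2*PI*beta)) in *.
    set (wi := sin (-2*PI*beta)) in *.
    set (v := 4*(1-x)).
    pose proof (COS_bound (-2*PI*alpha)) as Bz. fold zr in Bz.
    split.
    + intros [HD | [HEr HEi]]; [left; exact HD|].
      pose proof (key v zr zi wr wi Hz Hw) as K.
      rewrite HEr, HEi in K.
      assert (K0 : (v-1)*(v+1)*(v+2*zr)^2 = 0) by lra. clear K.
      apply Rmult_integral in K0 as [K0|K0]; [apply Rmult_integral in K0 as [K0|K0]|].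
      *
        left.
        assert (Hv : v = 1) by lra.
        rewrite Hv in HEr, HEi.
        destruct (cmul0 (wr+1) wi (Kr 1 zr zi) (Ki 1 zr zi)) as [W1 W2].
        { rewrite <- HEr. unfold Er, Kr, Ki. ring. }
        { rewrite <- HEi. unfold Ei, Kr, Ki. ring. }
        { assert (E : Kr 1 zr zi ^2 + Ki 1 zr zi ^2 = 4*zr + 5)
            by (unfold Kr, Ki; ring [Hz]). lra. }
        assert (Hx : x = 3/4) by (unfold v in Hv; lra).
        rewrite Hx. replace wr with (-1) by lra. lra.
      *
        left.
        assert (Hv : v = -1) by lra.
        rewrite Hv in HEr, HEi.
        destruct (cmul0 (wr-1) wi (Kr (-1) zr zi) (Ki (-1) zr zi)) as [W1 W2].
        { rewrite <- HEr. unfold Er, Kr, Ki. ring. }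
        { rewrite <- HEi. unfold Ei, Kr, Ki. ring. }
        { assert (E : Kr (-1) zr zi ^2 + Ki (-1) zr zi ^2 = 5 - 4*zr)
            by (unfold Kr, Ki; ring [Hz]). lra. }
        assert (Hx : x = 5/4) by (unfold v in Hv; lra).
        rewrite Hx. replace wr with 1 by lra. lra.
      *
        assert (Hv : v = -2*zr) by nra.
        assert (Hx : x = 1 + 1/2 * zr) by (unfold v in Hv; lra).
        rewrite Hv in HEr, HEi.
        right.
        destruct (Req_dec zi 0) as [Hzi|Hzi].
        -- assert (E : (zr-1)*(zr+1) = 0) by (rewrite Hzi in Hz; lra).
           apply Rmult_integral in E as [E|E].
           ++ left. split; [|lra].
              assert (Hc1 : cos (2*PI*alpha) = 1) by (rewrite Hca; fold zr; lra).
              destruct (cos_1 _ Hc1) as [k Hk].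
              assert (Hak : alpha = IZR k)
                by (apply div2PI; rewrite Hk; ring).
              assert (k = 0%Z).
              { assert (0 <= k)%Z by (apply le_IZR; lra).
                assert (k < 1)%Z by (apply lt_IZR; lra). lia. }
              subst k. simpl in Hak. exact Hak.
           ++ right; left. split; [|lra].
              assert (Hc1 : cos (2*PI*alpha) = -1) by (rewrite Hca; fold zr; lra).
              destruct (cos_m1 _ Hc1) as [k Hk].
              assert (Hak : alpha = IZR k + 1/2)
                by (apply div2PI; rewrite Hk; field).
              assert (k = 0%Z).
              { assert (-1 < k)%Z by (apply lt_IZR; lra).
                assert (k < 1)%Z by (apply lt_IZR; lra). lia. }
              subst k. simpl in Hak. lra.
        -- right; right. split; [|exact Hx].
           destruct (cmul0 (Yr zr zi wr wi + 1) (Yi zr zi wr wi)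
                        (Kr (-2*zr) zr zi) (Ki (-2*zr) zr zi)) as [Y1 Y2].
           { rewrite third_r by exact Hz. rewrite HEr, HEi. ring. }
           { rewrite third_i by exact Hz. rewrite HEr, HEi. ring. }
           { assert (E : Kr (-2*zr) zr zi ^2 + Ki (-2*zr) zr zi ^2 = 4*zi^2)
               by (unfold Kr, Ki; ring [Hz]).
             rewrite E. intro E'. apply Hzi. nra. }
           assert (Hc1 : cos (-2*PI*(3*alpha+beta)) = -1) by lra.
           destruct (cos_m1 _ Hc1) as [k Hk].
           exists (- k - 1)%Z. rewrite minus_IZR, opp_IZR.
           apply div2PI. lra.
    + intros [HD | [[Ha0 Hx] | [[Ha1 Hx] | [[k Hk] Hx]]]]; [left; exact HD| | |]; right.
      * assert (Ezr : zr = 1).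
        { unfold zr. rewrite Ha0. replace (-2*PI*0) with 0 by ring. apply cos_0. }
        assert (Ezi : zi = 0).
        { unfold zi. rewrite Ha0. replace (-2*PI*0) with 0 by ring. apply sin_0. }
        assert (Hv : v = -2) by (unfold v; lra).
        rewrite Hv, Ezr, Ezi. unfold Er, Ei, Kr, Ki. split; ring.
      * assert (Ezr : zr = -1).
        { unfold zr. rewrite Ha1. replace (-2*PI*(1/2)) with (-PI) by field.
          rewrite cos_neg. apply cos_PI. }
        assert (Ezi : zi = 0).
        { unfold zi. rewrite Ha1. replace (-2*PI*(1/2)) with (-PI) by field.
          rewrite sin_neg, sin_PI. ring. }
        assert (Hv : v = 2) by (unfold v; lra).
        rewrite Hv, Ezr, Ezi. unfold Er, Ei, Kr, Ki. split; ring.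
      * destruct (m1_cos (- k - 1) (-2*PI*(3*alpha+beta))) as [C1 S1].
        { rewrite Hk, minus_IZR, opp_IZR. field. }
        assert (Hv : v = -2*zr) by (unfold v; lra).
        rewrite Hv, conv_r, conv_i by assumption.
        rewrite <- Hyr, <- Hyi, C1, S1. split; ring.
Qed.
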